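(* Let $n=2k$ and let $X\subset\mathbb{P}^{n-1}_\mathbb{C}$ be the smooth quadric $\sum_{j=1}^k z_{2j-1}z_{2j}=0$, with the action of $T_\mathbb{C}=(\mathbb{C}^* )^k$ given by $t\cdot(z_1:\dots:z_n)=(t_1z_1:t_1^{-1}z_2:\dots:t_kz_{2k-1}:t_k^{-1}z_{2k})$ and $T=(S^1)^k\subset T_\mathbb{C}$. Let \[\mu(z_1:\dots:z_n)=\frac{1}{\sum_{i=1}^n|z_i|^2}\sum_{j=1}^k(|z_{2j-1}|^2-|z_{2j}|^2)e_j\] be the moment map and $P=\mu(X)=\mathrm{conv}(\pm e_1,\dots,\pm e_k)$. Then for every $u\in\partial P$ the preimage $\mu^{-1}(u)\cap X$ consists of exactly one $T$-orbit; consequently the GIT quotient $Y_{\lambda(u)}$ is a single point.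
   Context: $e_j$ denotes the $j$-th standard basis vector of $\mathbb{R}^k$. For $u\in P$, $Y_{\lambda(u)}$ denotes the GIT quotient $X^{ss}(u)/\!\!/T_\mathbb{C}$, where $X^{ss}(u)$ is the set of $x\in X$ with $u\in\mu(\overline{T_\mathbb{C}\cdot x})$; it is homeomorphic to $\mu^{-1}(u)/T$. *)

(* Defs.v *)
From HB Require Import structures.
From mathcomp Require Import all_boot all_order all_algebra.
From mathcomp Require Import all_classical all_reals all_analysis.
From mathcomp Require Import complex.
Set Implicit Arguments. Unset Strict Implicit. Unset Printing Implicit Defensive.
Import Order.TTheory GRing.Theory Num.Theory.
Import numFieldNormedType.Exports.
Local Open Scope ring_scope.
Local Open Scope classical_set_scope.


Section Quadric.
Variable R : realType.
Variable k : nat.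
Local Notation C := (R[i]).
Local Notation n := (k.*2).

(* Homogeneous coordinates (z_1 : ... : z_n), 0-based: z_{2j-1} is z (ev j),
   z_{2j} is z (od j) for j : 'I_k (0-based). *)
Lemma ev_subproof (j : 'I_k) : (j.*2 < n)%N.
Proof. by rewrite ltn_double. Qed.
Lemma od_subproof (j : 'I_k) : (j.*2.+1 < n)%N.
Proof. by rewrite -doubleS leq_double. Qed.
Definition ev (j : 'I_k) : 'I_n := Ordinal (ev_subproof j).
Definition od (j : 'I_k) : 'I_n := Ordinal (od_subproof j).

Lemma hf_subproof (i : 'I_n) : (i./2 < k)%N.
Proof.
have := ltn_ord i; rewrite -[X in (X < _)%N](odd_double_half i).
case: (odd i) => /= h.
  by rewrite -ltn_double; apply: leq_trans h; rewrite leqnSn.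
by rewrite -ltn_double; rewrite add0n in h.
Qed.
Definition hf (i : 'I_n) : 'I_k := Ordinal (hf_subproof i).

Definition sqmod (x : C) : R := (complex.Re x) ^+ 2 + (complex.Im x) ^+ 2.

(* a point of P^{n-1}: a nonzero vector of C^n (up to C^* scaling) *)
Definition nonzero_vec (z : 'I_n -> C) := exists i, z i != 0.

Definition inX (z : 'I_n -> C) :=
  nonzero_vec z /\ \sum_(j < k) z (ev j) * z (od j) = 0.

Definition tact (t : 'I_k -> C) (z : 'I_n -> C) : 'I_n -> C :=
  fun i => (if odd i then (t (hf i))^-1 else t (hf i)) * z i.

Definition inT (t : 'I_k -> C) := forall j, `|t j| = 1.

Definition same_T_orbit (z w : 'I_n -> C) :=
  exists t, inT t /\ exists l : C, l != 0 /\ w = (fun i => l * tact t z i).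

Definition e_ (j : 'I_k) : 'rV[R]_k := delta_mx 0 j.

Definition mu (z : 'I_n -> C) : 'rV[R]_k :=
  (\sum_(i < n) sqmod (z i))^-1 *:
    \sum_(j < k) (sqmod (z (ev j)) - sqmod (z (od j))) *: e_ j.

Definition Ppoly : set 'rV[R]_k :=
  [set u | exists a b : 'I_k -> R,
     (forall j, 0 <= a j /\ 0 <= b j) /\
     \sum_(j < k) (a j + b j) = 1 /\
     u = \sum_(j < k) (a j *: e_ j + b j *: (- e_ j))].

Definition bdP : set 'rV[R]_k := closure Ppoly `\` interior Ppoly.

End Quadric.

(* Main.v *)
Require Import Defs.
From HB Require Import structures.
From mathcomp Require Import all_boot all_order all_algebra.
From mathcomp Require Import all_classical all_reals all_analysis.
From mathcomp Require Import complex.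
Import Order.TTheory GRing.Theory Num.Theory.
Import numFieldNormedType.Exports.
Local Open Scope ring_scope.
Local Open Scope classical_set_scope.
From mathcomp Require Import ring lra zify.

Section S.
Variable R : realType.
Variable k : nat.

Definition fsum (v : 'rV[R]_k) : R := \sum_(j < k) `|v 0 j|.

Lemma fsum_cont : continuous fsum.
Proof.
rewrite /fsum; elim: (index_enum _) => [|j s IH].
  have -> : (fun x : 'rV[R]_k => \sum_(j <- [::]) `|x 0 j|) = fun=> 0.
    by apply/funext => x; rewrite big_nil.
  by move=> v; exact: cst_continuous.
have -> : (fun x : 'rV[R]_k => \sum_(j0 <- j :: s) `|x 0 j0|) =
   (fun x : 'rV[R]_k => `|x 0 j|) + (fun x => \sum_(j0 <- s) `|x 0 j0|).
  by apply/funext => x; rewrite big_cons.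
move=> v; apply: continuousD => //.
apply: continuous_comp; first exact: coord_continuous.
exact: norm_continuous.
exact: IH.

Qed.

Lemma sum_e (c : 'I_k -> R) j : (\sum_(l < k) c l *: e_ R l) 0 j = c j.
Proof.
rewrite summxE (bigD1 j) //= big1 ?addr0.
  by rewrite !mxE !eqxx mulr1.
by move=> l /negPf hl; rewrite !mxE eq_sym hl mulr0.
Qed.

Lemma row_e (v : 'rV[R]_k) : v = \sum_(l < k) v 0 l *: e_ R l.
Proof. by apply/rowP => j; rewrite sum_e. Qed.

Lemma Ppoly_le v : Ppoly v -> fsum v <= 1.
Proof.
move=> [a [b [hab [hs ->]]]].
rewrite -hs /fsum; apply: ler_sum => j _.
have -> : (\sum_(j0 < k) (a j0 *: e_ R j0 + b j0 *: - e_ R j0)) 0 j = a j - b j.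
  rewrite -(sum_e (fun l => a l - b l)); congr (fun_of_matrix _ _ _).
  by apply: eq_bigr => l _; rewrite scalerN -scaleNr scalerDl.
have [ha hb] := hab j.
by rewrite (le_trans (ler_normB _ _)) // !ger0_norm.
Qed.

Lemma Ppoly_lt v : (0 < k)%N -> fsum v < 1 -> Ppoly v.
Proof.
move=> k0 hv.
set d := (1 - fsum v) / (k.*2)%:R.
have d0 : 0 <= d by rewrite divr_ge0 // subr_ge0 ltW.
exists (fun j => (`|v 0 j| + v 0 j) / 2 + d), (fun j => (`|v 0 j| - v 0 j) / 2 + d).
split; [move=> j; split|split].
- have := ler_norm (v 0 j); have := ler_norm (- v 0 j); rewrite normrN => h1 h2.
  apply: addr_ge0 => //; apply: divr_ge0 => //; lra.
- have := ler_norm (v 0 j); have := ler_norm (- v 0 j); rewrite normrN => h1 h2.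
  apply: addr_ge0 => //; apply: divr_ge0 => //; lra.
- rewrite (eq_bigr (fun j => `|v 0 j| + d *+ 2)); last first.
    by move=> j _; rewrite mulr2n; field.
  rewrite big_split /= sumr_const card_ord -/(fsum v) -mulrnA mul2n.
  have hk : (k.*2)%:R != 0 :> R by rewrite pnatr_eq0 double_eq0 -lt0n.
  by rewrite /d -[_ *+ k.*2]mulr_natr divfK // addrC subrK.
- pose A := (fun j => (`|v 0 j| + v 0 j) / 2 + d); pose B := (fun j => (`|v 0 j| - v 0 j) / 2 + d).
  rewrite -/(A _) -/(B _).
  have -> : \sum_(j < k) (A j *: e_ R j + B j *: - e_ R j) = \sum_(j < k) (A j - B j) *: e_ R j.
    by apply: eq_bigr => l _; rewrite scalerN -scaleNr -scalerDl.
  by apply/rowP => j; rewrite sum_e /A /B; field.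
Qed.

Lemma bdP_fsum u : bdP u -> (0 < k)%N /\ fsum u = 1.
Proof.
move=> [hcl hint].
have op1 : open (fsum @^-1` [set x | x > 1]).
  by apply: open_comp => [x _|]; [exact: fsum_cont | exact: open_gt].
have op2 : open (fsum @^-1` [set x | x < 1]).
  by apply: open_comp => [x _|]; [exact: fsum_cont | exact: open_lt].
have le1 : fsum u <= 1.
  rewrite leNgt; apply/negP => h.
  have /hcl [v [Pv /= fv]] : nbhs u (fsum @^-1` [set x | x > 1]).
    by move: op1; rewrite openE => /(_ u h).
  by have := @Ppoly_le v Pv; rewrite leNgt fv.
have k0 : (0 < k)%N.
  rewrite lt0n; apply/negP => /eqP k0.
  have /hcl [v [[a [b [_ [hs _]]]] _]] : nbhs u setT by apply: filterT.
  by move: hs; rewrite big1 => [/eqP|j]; [rewrite eq_sym oner_eq0 | by have := ltn_ord j; move: (nat_of_ord j) (k0) => m ->].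
split => //; apply/eqP; rewrite eq_le le1 /= leNgt; apply/negP => h.
apply: hint; rewrite /interior /=.
apply: (filterS (P := fsum @^-1` [set x | x < 1])).
  by move=> v /= hv; exact: Ppoly_lt.
by move: op2; rewrite openE => /(_ u h).
Qed.
End S.

Section S2.
Local Open Scope complex_scope.
Variable R : realType.
Variable k : nat.
Local Notation C := (R[i]).
Local Notation n := (k.*2).

Lemma ev_odd (j : 'I_k) : odd (@ev k j) = false.
Proof. by rewrite /= odd_double. Qed.
Lemma od_odd (j : 'I_k) : odd (@od k j) = true.
Proof. by rewrite /= odd_double. Qed.
Lemma hf_ev (j : 'I_k) : hf (ev j) = j.
Proof. by apply: val_inj; rewrite /= doubleK. Qed.
Lemma hf_od (j : 'I_k) : hf (od j) = j.
Proof. by apply: val_inj; rewrite /= uphalf_double. Qed.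

Lemma ind_n (P : 'I_n -> Prop) :
  (forall j, P (ev j)) -> (forall j, P (od j)) -> forall i, P i.
Proof.
move=> he ho i.
have e := odd_double_half i.
case hi: (odd i); rewrite hi in e.
  have -> : i = od (hf i) by apply: val_inj; rewrite /= -[in LHS]e add1n.
  exact: ho.
have -> : i = ev (hf i) by apply: val_inj; rewrite /= -[in LHS]e add0n.
exact: he.
Qed.

Lemma sum_n (F : 'I_n -> R) :
  \sum_(i < n) F i = \sum_(j < k) (F (ev j) + F (od j)).
Proof.
rewrite (partition_big (@hf k) xpredT) //=.
apply: eq_bigr => j _.
rewrite (bigD1 (ev j)) ?hf_ev //= (bigD1 (od j)) /=; last first.
  rewrite hf_od eqxx /=; apply/eqP => /(congr1 val) /=; lia.
rewrite big1 ?addr0 //.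
move=> i; elim/ind_n: i => j'.
  by rewrite hf_ev => /andP [/andP[/eqP -> /negP]].
by rewrite hf_od => /andP [/andP[/eqP -> _] /negP].
Qed.

Lemma sqmod_ge0 (x : C) : 0 <= sqmod x.
Proof. by rewrite /sqmod addr_ge0 // sqr_ge0. Qed.

Lemma sqmod_eq0 (x : C) : (sqmod x == 0) = (x == 0).
Proof.
case: x => a b; rewrite /sqmod /= paddr_eq0 ?sqr_ge0 // !sqrf_eq0.
by apply/andP/eqP => [[/eqP -> /eqP ->]|[-> ->]].
Qed.

Lemma sum_e' (c : 'I_k -> R) j : (\sum_(l < k) c l *: e_ R l) 0 j = c j.
Proof.
rewrite summxE (bigD1 j) //= big1 ?addr0.
  by rewrite !mxE !eqxx mulr1.
by move=> l /negPf hl; rewrite !mxE eq_sym hl mulr0.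
Qed.

Lemma mu_entry (z : 'I_n -> C) j :
  mu z 0 j = (\sum_(i < n) sqmod (z i))^-1 * (sqmod (z (ev j)) - sqmod (z (od j))).
Proof. by rewrite /mu mxE sum_e'. Qed.


Lemma S_gt0 (z : 'I_n -> C) : inX z -> 0 < \sum_(i < n) sqmod (z i).
Proof.
move=> [[i0 hi0] _].
rewrite lt_def sumr_ge0 ?andbT => [|i _]; last exact: sqmod_ge0.
apply/negP => /eqP /psumr_eq0P h.
have := h (fun i _ => sqmod_ge0 (z i)) i0 isT; move/eqP; rewrite sqmod_eq0 (negPf hi0) //.
Qed.

Lemma struct (z : 'I_n -> C) (u : 'rV[R]_k) : inX z -> mu z = u ->
  \sum_(j < k) `|u 0 j| = 1 ->
  forall j, sqmod (z (ev j)) = (\sum_(i < n) sqmod (z i)) * ((`|u 0 j| + u 0 j) / 2) /\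
            sqmod (z (od j)) = (\sum_(i < n) sqmod (z i)) * ((`|u 0 j| - u 0 j) / 2).
Proof.
move=> hz hmu hs.
have S0 := @S_gt0 z hz.
set S := \sum_(i < n) sqmod (z i) in S0 *.
have hd j : sqmod (z (ev j)) - sqmod (z (od j)) = S * u 0 j.
  by rewrite -hmu mu_entry -/S mulVKf // gt_eqF.
have hsum : \sum_(j < k) ((sqmod (z (ev j)) + sqmod (z (od j))) - `|sqmod (z (ev j)) - sqmod (z (od j))|) = 0.
  rewrite sumrB -(sum_n (fun i => sqmod (z i))) -/S.
  under eq_bigr do rewrite hd normrM (gtr0_norm S0).
  by rewrite -mulr_sumr hs mulr1 subrr.
have hge j : 0 <= (sqmod (z (ev j)) + sqmod (z (od j))) - `|sqmod (z (ev j)) - sqmod (z (od j))|.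
  rewrite subr_ge0 (le_trans (ler_normB _ _)) // !ger0_norm //; exact: sqmod_ge0.
move=> j.
have := (psumr_eq0P (fun j _ => hge j) hsum) j isT.
move/eqP; rewrite subr_eq0 => /eqP hpl.
have hm := hd j.
rewrite hm normrM (gtr0_norm S0) in hpl.
set a := sqmod (z (ev j)) in hm hpl *; set b := sqmod (z (od j)) in hm hpl *.
split.
  have -> : a = ((a + b) + (a - b)) / 2 by field.
  by rewrite hpl hm; field.
have -> : b = ((a + b) - (a - b)) / 2 by field.
by rewrite hpl hm; field.
Qed.


Lemma sqmodC (x : R) : 0 <= x -> sqmod ((Num.sqrt x)%:C : C) = x.
Proof. by move=> hx; rewrite /sqmod /= expr0n /= addr0 sqr_sqrtr. Qed.

Lemma existence (u : 'rV[R]_k) : \sum_(j < k) `|u 0 j| = 1 ->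
  exists z : 'I_n -> C, inX z /\ mu z = u.
Proof.
move=> hs.
pose p j := (`|u 0 j| + u 0 j) / 2; pose q j := (`|u 0 j| - u 0 j) / 2.
have hp j : 0 <= p j.
  have := ler_norm (u 0 j); have := ler_norm (- u 0 j); rewrite normrN => h1 h2.
  rewrite /p divr_ge0 //; lra.
have hq j : 0 <= q j.
  have := ler_norm (u 0 j); have := ler_norm (- u 0 j); rewrite normrN => h1 h2.
  rewrite /q divr_ge0 //; lra.
have hpq j : p j * q j = 0.
  rewrite /p /q; have -> : (`|u 0 j| + u 0 j) / 2 * ((`|u 0 j| - u 0 j) / 2) =
     (`|u 0 j| ^+ 2 - u 0 j ^+ 2) / 4 by field.
  by rewrite real_normK ?num_real // subrr mul0r.
pose z (i : 'I_n) : C := if odd i then (Num.sqrt (q (hf i)))%:C else (Num.sqrt (p (hf i)))%:C.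
have zev j : z (ev j) = (Num.sqrt (p j))%:C by rewrite /z ev_odd hf_ev.
have zod j : z (od j) = (Num.sqrt (q j))%:C by rewrite /z od_odd hf_od.
have hS : \sum_(i < n) sqmod (z i) = 1.
  rewrite sum_n -hs; apply: eq_bigr => j _.
  by rewrite zev zod !sqmodC // /p /q; field.
exists z; split; last first.
  by apply/rowP => j; rewrite mu_entry hS invr1 mul1r zev zod !sqmodC // /p /q; field.
split.
  have [j hj] : exists j, u 0 j != 0.
    apply/not_existsP => h; move: hs; rewrite big1 => [/eqP|j _].
      by rewrite eq_sym oner_eq0.
    by have /negP := h j; rewrite negbK => /eqP ->; rewrite normr0.
  case hz: (z (ev j) == 0); last by exists (ev j); rewrite hz.
  exists (od j); rewrite -sqmod_eq0 zod sqmodC //.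
  move: hz; rewrite -sqmod_eq0 zev sqmodC // => /eqP hp0.
  apply/eqP => hq0; move: hj; rewrite -normr_eq0.
  have -> : `|u 0 j| = p j + q j by rewrite /p /q; field.
  by rewrite hp0 hq0 addr0 eqxx.
apply: big1 => j _; rewrite zev zod -rmorphM -sqrtrM // hpq sqrtr0.
by rewrite rmorph0.
Qed.


Lemma pq0 (x : R) : (`|x| + x) / 2 * ((`|x| - x) / 2) = 0.
Proof.
have -> : (`|x| + x) / 2 * ((`|x| - x) / 2) = (`|x| ^+ 2 - x ^+ 2) / 4 by field.
by rewrite real_normK ?num_real // subrr mul0r.
Qed.

Lemma uniqueness (z w : 'I_n -> C) (u : 'rV[R]_k) : inX z -> inX w -> mu z = u -> mu w = u ->
  \sum_(j < k) `|u 0 j| = 1 -> same_T_orbit z w.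
Proof.
move=> hz hw hmz hmw hs.
have Sz0 := @S_gt0 z hz; have Sw0 := @S_gt0 w hw.
have stz := @struct z u hz hmz hs; have stw := @struct w u hw hmw hs.
set Sz := \sum_(i < n) sqmod (z i) in Sz0 stz.
set Sw := \sum_(i < n) sqmod (w i) in Sw0 stw.
pose r := Sw / Sz.
have r0 : 0 < r by rewrite divr_gt0.
have hrel i : sqmod (w i) = r * sqmod (z i).
  elim/ind_n: i => j; have [e1 e2] := stz j; have [f1 f2] := stw j.
    by rewrite e1 f1 /r; field; rewrite gt_eqF.
  by rewrite e2 f2 /r; field; rewrite gt_eqF.
have hexcl j : z (ev j) != 0 -> z (od j) = 0.
  move=> hne; apply/eqP; rewrite -sqmod_eq0.
  have [e1 e2] := stz j.
  have : sqmod (z (ev j)) * sqmod (z (od j)) == 0.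
    by rewrite e1 e2 mulrACA pq0 mulr0.
  by rewrite mulf_eq0 !sqmod_eq0 (negPf hne).
have hw0 i : (w i == 0) = (z i == 0).
  by rewrite -!sqmod_eq0 hrel mulf_eq0 (gt_eqF r0).
pose l : C := (Num.sqrt r)%:C.
have l0 : 0 < l by rewrite ltcR sqrtr_gt0.
have hnorm i : `|w i| = l * `|z i|.
  rewrite !normc_def -[complex.Re (w i) ^+ 2 + _]/(sqmod (w i)) -[complex.Re (z i) ^+ 2 + _]/(sqmod (z i)).
  by rewrite hrel sqrtrM ?(ltW r0) // rmorphM.
have hl : `|l| = l by rewrite gtr0_norm.
have hlz i : z i != 0 -> l * `|z i| != 0 by move=> h; rewrite mulf_eq0 negb_or normr_eq0 h gt_eqF.
pose t (j : 'I_k) : C := if z (ev j) != 0 then w (ev j) / (l * z (ev j))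
  else if z (od j) != 0 then l * z (od j) / w (od j) else 1.
exists t; split.
  move=> j; rewrite /t.
  case: ifP => h1.
    by rewrite normrM normfV normrM hl hnorm divff // hlz.
  case: ifP => h2; last by rewrite normr1.
  by rewrite normrM normrV ?unitfE ?hw0 // normrM hl hnorm divff // hlz.
exists l; split; first by rewrite gt_eqF.
apply/funext; elim/ind_n => j; rewrite /tact ?ev_odd ?od_odd ?hf_ev ?hf_od /t.
  case: ifP => h1.
    by field; rewrite h1 (gt_eqF l0).
  move/negbFE: h1 => /eqP h1; rewrite h1 mulr0.
  by rewrite mulr0; apply/eqP; rewrite hw0 h1.
case: ifP => h1.
  rewrite hexcl // !mulr0; apply/eqP; rewrite hw0; apply/eqP; exact: hexcl.
case: ifP => h2.
  have hw2 : w (od j) != 0 by rewrite hw0.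
  by rewrite invf_div; field; rewrite h2 (gt_eqF l0).
move/negbFE: h2 => /eqP h2; rewrite h2 !mulr0.
by apply/eqP; rewrite hw0 h2.
Qed.

End S2.

Theorem lemma3p2 (R : realType) (k : nat) (u : 'rV[R]_k) :
  bdP u ->
  (exists z : 'I_k.*2 -> R[i], inX z /\ mu z = u) /\
  (forall z w : 'I_k.*2 -> R[i],
      inX z -> inX w -> mu z = u -> mu w = u -> same_T_orbit z w).
Proof.
move=> hb; have [_ hs] := @bdP_fsum R k u hb.
split; first exact: (@existence R k u hs).
move=> z w hz hw hmz hmw; exact: (@uniqueness R k z w u hz hw hmz hmw hs).
Qed.
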